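(* Let $K\ge2$, $0<q<p$ with $p+(K-1)q=1$, $\phi\in\Delta$ with $\phi_1\le\cdots\le\phi_K$, and $n\in\{1,\dots,K-1\}$. If $\theta^{[n-1]}\in\Delta$, then $\theta^{[n]}\in\Delta$ and $D_{KL}(\phi,\mathcal{M}(\theta^{[n-1]}))\le D_{KL}(\phi,\mathcal{M}(\theta^{[n]}))$.
   Context: $\Delta=\{\theta\in\mathbb{R}^K:\theta_i\ge0,\sum_i\theta_i=1\}$. $\mathcal{M}(\theta)_y=q+(p-q)\theta_y$. $D_{KL}(\phi,\psi)=\sum_i\phi_i\log(\phi_i/\psi_i)$ with $0\log(0/\cdot)=0$. For sorted $\phi$ and $m\in\{0,\dots,K-1\}$: $\lambda^{[m]}=\frac{(p-q)\sum_{i>m}\phi_i}{1-mq}$, and $\theta^{[m]}_i=0$ for $i\le m$, $\theta^{[m]}_i=\frac{\phi_i}{\lambda^{[m]}}-\frac{q}{p-q}$ for $i>m$. *)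

(* Defs.v *)
(* R : realType, indices 'I_K (0-based; paper index i <-> ordinal i-1). *)
From HB Require Import structures.
From mathcomp Require Import all_boot all_order all_algebra.
From mathcomp Require Import reals exp.
Set Implicit Arguments. Unset Strict Implicit. Unset Printing Implicit Defensive.
Import Order.TTheory GRing.Theory Num.Theory.
Local Open Scope ring_scope.

Section Defs.
Variable R : realType.
Variable K : nat.

Definition in_simplex (th : 'I_K -> R) : Prop :=
  (forall i, 0 <= th i) /\ \sum_(i < K) th i = 1.

Definition Mch (p q : R) (th : 'I_K -> R) : 'I_K -> R :=
  fun y => q + (p - q) * th y.

Definition DKL (phi psi : 'I_K -> R) : R :=
  \sum_(i < K) (if phi i == 0 then 0 else phi i * ln (phi i / psi i)).

(* lambda^[m] = (p-q) sum_{i>m} phi_i / (1 - m q)   (1-based i > m  <=>  0-based i >= m) *)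
Definition lambda_m (p q : R) (phi : 'I_K -> R) (m : nat) : R :=
  (p - q) * (\sum_(i < K | (m <= i)%N) phi i) / (1 - m%:R * q).

Definition theta_m (p q : R) (phi : 'I_K -> R) (m : nat) : 'I_K -> R :=
  fun i => if (i < m)%N then 0 else phi i / lambda_m p q phi m - q / (p - q).

End Defs.

(* Main.v *)
Require Import Defs.
From HB Require Import structures.
From mathcomp Require Import all_boot all_order all_algebra.
From mathcomp Require Import reals exp.
From mathcomp Require Import ring lra zify.
Import Order.TTheory GRing.Theory Num.Theory.
Local Open Scope ring_scope.

Lemma ln_le_sub1 {R : realType} {x : R} : 0 < x -> ln x <= x - 1.
Proof. move=> x0; have := expR_ge1Dx (ln x); rewrite lnK ?posrE //; lra. Qed.

Lemma logsum (R : realType) (a A q D : R) : 0 < a -> 0 < A -> 0 < q -> 0 < D ->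
  (a + A) * ln ((a + A) / (q + D)) <= a * ln (a / q) + A * ln (A / D).
Proof.
move=> a0 A0 q0 D0.
have s0 : 0 < a + A by lra. have t0 : 0 < q + D by lra.
have h1 := ln_le_sub1 (divr_gt0 (mulr_gt0 s0 q0) (mulr_gt0 t0 a0)).
have h2 := ln_le_sub1 (divr_gt0 (mulr_gt0 s0 D0) (mulr_gt0 t0 A0)).
have e1 : ln ((a + A) * q / ((q + D) * a)) = ln ((a + A) / (q + D)) - ln (a / q).
  rewrite -ln_div ?posrE ?divr_gt0 //; congr ln; field; lra.
have e2 : ln ((a + A) * D / ((q + D) * A)) = ln ((a + A) / (q + D)) - ln (A / D).
  rewrite -ln_div ?posrE ?divr_gt0 //; congr ln; field; lra.
rewrite e1 in h1; rewrite e2 in h2.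
have k1 := ler_wpM2l (ltW a0) h1.
have k2 := ler_wpM2l (ltW A0) h2.
have : a * ((a + A) * q / ((q + D) * a) - 1) + A * ((a + A) * D / ((q + D) * A) - 1) = 0.
  field; lra.
nra.
Qed.

Section H.
Variables (R : realType) (K : nat) (p q : R) (phi : 'I_K -> R).

Definition Sm (m : nat) := \sum_(i < K | (m <= i)%N) phi i.

Lemma sum_theta m : (1 <= K)%N -> (m <= K)%N -> 1 - m%:R * q != 0 -> Sm m != 0 -> p - q != 0 ->
  p + (K - 1)%:R * q = 1 -> \sum_(i < K) theta_m p q phi m i = 1.
Proof.
move=> K1 mK D0 S0 pq hp.
rewrite (eq_bigr (fun i : 'I_K => if (m <= i)%N then phi i / lambda_m p q phi m - q / (p - q) else 0)); last first.
  by move=> i _; rewrite /theta_m; case: (ltnP i m).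
rewrite -big_mkcond /= sumrB -mulr_suml.
have -> : \sum_(i < K | (m <= i)%N) q / (p - q) = q / (p - q) *+ (K - m).
  by rewrite -sumr_const_nat big_geq_mkord.
rewrite -mulr_natr natrB //; rewrite natrB // in hp.
rewrite /lambda_m -/(Sm m).
have hpe : p = 1 - (K%:R - 1) * q by nra.
rewrite hpe in pq *.
field; rewrite ?S0 ?pq ?D0 //.
Qed.
Definition gterm (i : 'I_K) := if phi i == 0 then 0 else phi i * ln (phi i / q).

Lemma dkl_theta m : Sm m != 0 -> 1 - m%:R * q != 0 -> p - q != 0 ->
  DKL phi (Mch p q (theta_m p q phi m)) =
  \sum_(i < K | (i < m)%N) gterm i + Sm m * ln (Sm m / (1 - m%:R * q)).
Proof.
move=> S0 D0 pq.
rewrite /DKL (bigID (fun i : 'I_K => (i < m)%N)) /=; congr (_ + _).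
  by apply: eq_bigr => i im; rewrite /Mch /theta_m im mulr0 addr0.
rewrite /Sm mulr_suml; apply: eq_big => [i | i hi]; first by rewrite -leqNgt.
rewrite /Mch /theta_m (negbTE hi).
case: eqP => [->|/eqP ph]; first by rewrite mul0r.
congr (_ * ln _); rewrite /lambda_m -/(Sm m); field.
rewrite D0 pq S0 /=.
have -> : q * Sm m + (phi i * (1 - m%:R * q) + - q * Sm m) = phi i * (1 - m%:R * q) by ring.
by rewrite mulf_neq0.
Qed.
End H.
Arguments Sm {R K}.
Arguments gterm {R K}.
Arguments sum_theta {R K}.
Arguments dkl_theta {R K}.

Theorem lemma4 (R : realType) (K : nat) (p q : R) (phi : 'I_K -> R) (n : nat) :
  (2 <= K)%N ->
  0 < q -> q < p -> p + (K - 1)%:R * q = 1 ->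
  in_simplex phi ->
  (forall i j : 'I_K, (i <= j)%N -> phi i <= phi j) ->
  (1 <= n)%N -> (n <= K - 1)%N ->
  in_simplex (theta_m p q phi n.-1) ->
  in_simplex (theta_m p q phi n) /\
  DKL phi (Mch p q (theta_m p q phi n.-1)) <= DKL phi (Mch p q (theta_m p q phi n)).
Proof.
move=> K2 q0 qp hp [phi0 phi1] hsort n1 nK [th0 th1].
case: n n1 nK th0 th1 => [//|m] _ mK th0 th1 /=.
have mK1 : (m < K)%N by lia.
have lK : (K.-1 < K)%N by lia.
set j0 : 'I_K := Ordinal mK1.
set l : 'I_K := Ordinal lK.
set a := phi j0.
set A := Sm phi m.+1.
set D := 1 - m.+1%:R * q.
have hS : Sm phi m = a + A.
  rewrite /Sm (bigD1 j0) //=; congr (_ + _); apply: eq_bigl => i.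
  rewrite -(inj_eq val_inj) /=; lia.
have hG : \sum_(i < K | (i < m.+1)%N) gterm q phi i = \sum_(i < K | (i < m)%N) gterm q phi i + gterm q phi j0.
  rewrite (bigD1 j0) //= addrC; congr (_ + _); apply: eq_bigl => i.
  rewrite -(inj_eq val_inj) /=; lia.
have pl : 0 < phi l.
  rewrite ltNge; apply/negP => h.
  have : \sum_(i < K) phi i <= \sum_(i < K) phi l.
    apply: ler_sum => i _; apply: hsort => /=; have := ltn_ord i; lia.
  rewrite sumr_const card_ord phi1 -mulr_natr.
  have : (0 : R) <= K%:R by rewrite ler0n.
  nra.
have A0 : 0 < A.
  apply: (lt_le_trans pl); rewrite /A /Sm (bigD1 l) /=; last by lia.
  by rewrite lerDl sumr_ge0.
have hm : m.+1%:R = m%:R + 1 :> R by rewrite -natr1.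
have hK : (m.+1%:R : R) <= (K - 1)%:R by rewrite ler_nat.
have D0 : q < D by rewrite /D; nra.
have hDq : 1 - m%:R * q = D + q by rewrite /D hm; ring.
have pq0 : p - q != 0 by rewrite subr_eq0 gt_eqF.
have a0 : 0 <= a by apply: phi0.
have haD : q * A <= a * D.
  have := th0 j0; rewrite /theta_m ltnn /lambda_m -/(Sm phi m) hS hDq.
  have -> : a / ((p - q) * (a + A) / (D + q)) - q / (p - q) = (a * D - q * A) / ((p - q) * (a + A)).
    field; rewrite pq0 /=; apply/andP; split; rewrite gt_eqF //; lra.
  rewrite ler_pdivlMr; last by rewrite mulr_gt0 ?subr_gt0 //; lra.
  lra.
have apos : 0 < a by nra.
split.
  split; last first.
    apply: sum_theta => //; first lia.
    - by rewrite gt_eqF //; lra.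
    - by rewrite gt_eqF.
  move=> i; rewrite /theta_m; case: ltnP => hi; first by [].
  have ha : a <= phi i by apply: hsort; rewrite /=; lia.
  rewrite /lambda_m -/(Sm phi m.+1) -/A -/D.
  have -> : phi i / ((p - q) * A / D) - q / (p - q) = (phi i * D - q * A) / ((p - q) * A).
    field; rewrite pq0 /=; rewrite !gt_eqF //; lra.
  apply: divr_ge0; first nra.
  by rewrite mulr_ge0 // ?subr_ge0 ?ltW.
have nA : Sm phi m.+1 != 0 by rewrite gt_eqF.
have nD : D != 0 by rewrite gt_eqF //; lra.
have nS : Sm phi m != 0 by rewrite hS gt_eqF //; lra.
have nM : 1 - m%:R*q != 0 by rewrite hDq gt_eqF //; lra.
rewrite !dkl_theta //.
rewrite hG hS hDq -[X in _ <= X]addrA lerD2l /gterm -/a (gt_eqF apos) [D + q]addrC.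
exact: (@logsum R _ _ _ _ apos A0 q0 (lt_trans q0 D0)).
Qed.
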